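(* If a closure model $\mathcal{M}=((X,\mathcal{C}_R),\mathcal{V})$ is quasi-discrete, finitely closed and finitely backward closed, then for all $x_1,x_2\in X$: $x_1\simeq x_2$ iff $x_1$ and $x_2$ satisfy exactly the same $\mathrm{SLCS}^-$ formulas.
   Context: $\mathcal{C}_R(A)=A\cup\{x\mid\exists a\in A.\ aRx\}$, $\vec{\mathcal{C}}(x)=\mathcal{C}_R(\{x\})$, $\overleftarrow{\mathcal{C}}(x)=\mathcal{C}_{R^{-1}}(\{x\})$, $\mathcal{V}:AP\to\mathcal{P}(X)$, $\mathcal{V}^{-1}(x)=\{p\mid x\in\mathcal{V}(p)\}$; finitely (backward) closed: all $\vec{\mathcal{C}}(x)$ (resp. $\overleftarrow{\mathcal{C}}(x)$) finite. Path: $\pi:\mathbb{N}\to X$ with $\pi[\mathcal{C}_{succ}(N)]\subseteq\mathcal{C}_R(\pi[N])$ for all $N$, $\mathcal{C}_{succ}$ based on $n\mapsto n+1$. $x\models\vec\rho\,\Phi_1[\Phi_2]$ iff some path $\pi$ and $\ell$ have $\pi(0)=x$, $\pi(\ell)\models\Phi_1$, $\pi(j)\models\Phi_2$ for $0<j<\ell$; $x\models\overleftarrow\rho\,\Phi_1[\Phi_2]$ iff some path $\pi$ and $\ell$ have $\pi(\ell)=x$, $\pi(0)\models\Phi_1$, $\pi(j)\models\Phi_2$ for $0<j<\ell$. $\bot=p\land\neg p$. $\mathrm{SLCS}^-$: $\Phi::=p\mid\neg\Phi\mid\Phi\lor\Phi\mid\vec\rho\,\Phi[\bot]\mid\overleftarrow\rho\,\Phi[\bot]$.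 $\simeq$: union of all non-empty equivalence relations $B$ with $(x_1,x_2)\in B\Rightarrow\mathcal{V}^{-1}(x_1)=\mathcal{V}^{-1}(x_2)$ and for all $C\in X/B$, $\vec{\mathcal{C}}(x_1)\cap C\neq\emptyset\iff\vec{\mathcal{C}}(x_2)\cap C\neq\emptyset$ and $\overleftarrow{\mathcal{C}}(x_1)\cap C\neq\emptyset\iff\overleftarrow{\mathcal{C}}(x_2)\cap C\neq\emptyset$. *)

(* Defs.v *)
From Stdlib Require Import Ensembles Finite_sets PeanoNat.

Set Implicit Arguments.

Section Defs.
Variables (X AP : Type) (R : X -> X -> Prop).

Definition CR (A : X -> Prop) : X -> Prop :=
  fun x => A x \/ exists a, A a /\ R a x.

Definition CRinv (A : X -> Prop) : X -> Prop :=
  fun x => A x \/ exists a, A a /\ R x a.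

Definition fwdC (x : X) : X -> Prop := CR (fun y => y = x).
Definition bwdC (x : X) : X -> Prop := CRinv (fun y => y = x).

Definition fin_closed : Prop := forall x, Finite X (fwdC x).
Definition fin_bclosed : Prop := forall x, Finite X (bwdC x).

Definition Csucc (N : nat -> Prop) : nat -> Prop :=
  fun n => N n \/ exists m, N m /\ n = S m.

Definition image (pi : nat -> X) (N : nat -> Prop) : X -> Prop :=
  fun x => exists m, N m /\ pi m = x.

Definition is_path (pi : nat -> X) : Prop :=
  forall (N : nat -> Prop) (x : X), image pi (Csucc N) x -> CR (image pi N) x.

End Defs.

(* Syntax of SLCS^- :  Φ ::= p | ¬Φ | Φ ∨ Φ | ρ→ Φ[⊥] | ρ← Φ[⊥] *)
Inductive slcsm (AP : Type) : Type :=
| SAtom : AP -> slcsm AP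
| SNeg : slcsm AP -> slcsm AP
| SOr : slcsm AP -> slcsm AP -> slcsm AP
| SRhoF : slcsm AP -> slcsm AP
| SRhoB : slcsm AP -> slcsm AP.

Arguments SAtom {AP}.
Arguments SNeg {AP}.
Arguments SOr {AP}.
Arguments SRhoF {AP}.
Arguments SRhoB {AP}.

(* satisfaction; ⊥ = p ∧ ¬p is satisfied by no point, so the guard
   "π(j) ⊨ ⊥ for 0 < j < ℓ" is rendered as "False for 0 < j < ℓ". *)
Fixpoint sat (X AP : Type) (R : X -> X -> Prop) (V : AP -> X -> Prop)
  (phi : slcsm AP) (x : X) : Prop :=
  match phi with
  | SAtom p => V p x
  | SNeg f => ~ sat R V f x
  | SOr f g => sat R V f x \/ sat R V g x
  | SRhoF f => exists (pi : nat -> X) (l : nat),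
      is_path R pi /\ pi 0 = x /\ sat R V f (pi l) /\
      (forall j, 0 < j < l -> False)
  | SRhoB f => exists (pi : nat -> X) (l : nat),
      is_path R pi /\ pi l = x /\ sat R V f (pi 0) /\
      (forall j, 0 < j < l -> False)
  end.

(* B is a CM-bisimulation condition, for an equivalence relation B;
   the classes of X/B are the sets {w | B z w}. *)
Definition bisim_cond (X AP : Type) (R : X -> X -> Prop) (V : AP -> X -> Prop)
  (B : X -> X -> Prop) : Prop :=
  forall x1 x2, B x1 x2 ->
    (forall p, V p x1 <-> V p x2) /\
    (forall z, (exists w, fwdC R x1 w /\ B z w) <-> (exists w, fwdC R x2 w /\ B z w)) /\
    (forall z, (exists w, bwdC R x1 w /\ B z w) <-> (exists w, bwdC R x2 w /\ B z w)).

Definition cm_bisim (X AP : Type) (R : X -> X -> Prop) (V : AP -> X -> Prop)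
  (x1 x2 : X) : Prop :=
  exists B : X -> X -> Prop,
    (exists a b, B a b) /\
    (forall a, B a a) /\ (forall a b, B a b -> B b a) /\
    (forall a b c, B a b -> B b c -> B a c) /\
    bisim_cond R V B /\ B x1 x2.

(* Main.v *)
Require Import Defs.
From Stdlib Require Import Ensembles Finite_sets PeanoNat Classical Lia.

Section S.
Variables (X AP : Type) (R : X -> X -> Prop) (V : AP -> X -> Prop).

Lemma satF f x : sat R V (SRhoF f) x <-> exists y, fwdC R x y /\ sat R V f y.
Proof.
  split.
  - intros (pi & l & Hp & H0 & Hf & Hl).
    destruct l as [|[|l]].
    + exists (pi 0). split; [left; auto | auto].
    + exists (pi 1). split; auto.
      assert (Hc : CR R (image pi (fun m => m = 0)) (pi 1)).
      { apply Hp. exists 1. split; auto. right. exists 0. auto. }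
      destruct Hc as [[m [Hm E]]|[a [[m [Hm E]] Ha]]]; subst.
      * left. auto.
      * right. exists (pi 0). auto.
    + exfalso. apply (Hl 1). lia.
  - intros (y & Hy & Hf).
    exists (fun n => match n with 0 => x | _ => y end), 1.
    split; [|split; [reflexivity|split; [exact Hf|intros; lia]]].
    intros N z [m [Hm E]]. destruct Hm as [Hm|[m' [Hm' ->]]].
    + left. exists m. auto.
    + destruct m' as [|k].
      * destruct Hy as [Hy|[a [Ha Hr]]].
        -- left. exists 0. split; auto. subst. auto.
        -- right. exists x. split; [exists 0; auto|]. subst; auto.
      * left. exists (S k). auto.
Qed.

Lemma satB f x : sat R V (SRhoB f) x <-> exists y, bwdC R x y /\ sat R V f y.
Proof.
  split.
  - intros (pi & l & Hp & H0 & Hf & Hl).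
    destruct l as [|[|l]].
    + exists (pi 0). split; [left; auto | auto].
    + exists (pi 0). split; auto.
      assert (Hc : CR R (image pi (fun m => m = 0)) (pi 1)).
      { apply Hp. exists 1. split; auto. right. exists 0. auto. }
      destruct Hc as [[m [Hm E]]|[a [[m [Hm E]] Ha]]]; subst.
      * left. auto.
      * right. exists (pi 1). auto.
    + exfalso. apply (Hl 1). lia.
  - intros (y & Hy & Hf).
    exists (fun n => match n with 0 => y | _ => x end), 1.
    split; [|split; [reflexivity|split; [exact Hf|intros; lia]]].
    intros N z [m [Hm E]]. destruct Hm as [Hm|[m' [Hm' ->]]].
    + left. exists m. auto.
    + destruct m' as [|k].
      * destruct Hy as [Hy|[a [Ha Hr]]].
        -- left. exists 0. split; auto. subst. auto.
        -- right. exists y. split; [exists 0; auto|]. subst; auto.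
      * left. exists (S k). auto.
Qed.

Definition SAnd (f g : slcsm AP) := SNeg (SOr (SNeg f) (SNeg g)).

Lemma satAnd f g x : sat R V (SAnd f g) x <-> sat R V f x /\ sat R V g x.
Proof.
  simpl. split.
  - intros H. split; apply NNPP; intro; apply H; auto.
  - intros [A B] [C|C]; auto.
Qed.

Lemma sep_fin (C : Ensemble X) (HC : Finite X C) z :
  (forall w, C w -> exists phi, sat R V phi z /\ ~ sat R V phi w) ->
  (forall w, ~ C w) \/ exists phi, sat R V phi z /\ forall w, C w -> ~ sat R V phi w.
Proof.
  induction HC as [|A HA IH x Hx]; intros H.
  - left. intros w Hw. destruct Hw.
  - assert (Hxx : Add X A x x) by (right; constructor).
    destruct (H x Hxx) as [psi [Hz Hn]].
    destruct IH as [IH|[phi [Hp Hq]]].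
    + intros w Hw. apply H. left. exact Hw.
    + right. exists psi. split; auto.
      intros w Hw. destruct Hw as [w Hw|w Hw].
      * exfalso. apply (IH w Hw).
      * destruct Hw. exact Hn.
    + right. exists (SAnd phi psi). split; [apply satAnd; auto|].
      intros w Hw Hs. apply satAnd in Hs. destruct Hs as [H1 H2].
      destruct Hw as [w Hw|w Hw].
      * exact (Hq w Hw H1).
      * destruct Hw. exact (Hn H2).
Qed.

Definition L a b := forall phi, sat R V phi a <-> sat R V phi b.

Lemma dist a b : ~ L a b -> exists phi, sat R V phi a /\ ~ sat R V phi b.
Proof.
  intros H. apply NNPP. intro H'. apply H. intro phi.
  split; intro Hs; apply NNPP; intro Hn.
  - apply H'. exists phi. auto.
  - apply H'. exists (SNeg phi). simpl. auto.
Qed.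

Lemma modal_step (C : X -> X -> Prop) (M : slcsm AP -> slcsm AP)
  (HM : forall f x, sat R V (M f) x <-> exists y, C x y /\ sat R V f y)
  (Hfin : forall x, Finite X (C x)) (Hrefl : forall x, C x x)
  x1 x2 : L x1 x2 -> forall z,
  (exists w, C x1 w /\ L z w) -> (exists w, C x2 w /\ L z w).
Proof.
  intros Hx z [w [Hw Hzw]].
  apply NNPP. intro Hno.
  destruct (sep_fin _ (Hfin x2) z) as [E|[phi [Hp Hq]]].
  - intros w' Hw'. apply dist. intro Hl. apply Hno. eauto.
  - exact (E x2 (Hrefl x2)).
  - assert (Hs : sat R V (M phi) x1).
    { apply HM. exists w. split; auto. apply Hzw. auto. }
    apply Hx in Hs. apply HM in Hs. destruct Hs as [y [Hy Hy']].
    exact (Hq y Hy Hy').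
Qed.

End S.

Theorem theorem3 (X AP : Type) (R : X -> X -> Prop) (V : AP -> X -> Prop) :
  fin_closed R -> fin_bclosed R ->
  forall x1 x2 : X,
    cm_bisim R V x1 x2 <-> (forall phi : slcsm AP, sat R V phi x1 <-> sat R V phi x2).
Proof.
  intros HF HB x1 x2. split.
  - intros (B & _ & Hr & Hs & Ht & Hc & H12).
    assert (K : forall phi a b, B a b -> (sat R V phi a <-> sat R V phi b)).
    { induction phi as [p|f IH|f IHf g IHg|f IH|f IH]; intros a b Hab.
      - apply (Hc a b Hab).
      - simpl. rewrite (IH a b Hab). tauto.
      - simpl. rewrite (IHf a b Hab), (IHg a b Hab). tauto.
      - rewrite !satF.
        assert (G : forall a b, B a b -> (exists y, fwdC R a y /\ sat R V f y) ->
                  exists y, fwdC R b y /\ sat R V f y).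
        { intros a' b' Hab' [y [Hy Hf]].
          destruct (Hc a' b' Hab') as [_ [Hfw _]].
          destruct (proj1 (Hfw y) (ex_intro _ y (conj Hy (Hr y)))) as [w [Hw Hyw]].
          exists w. split; auto. apply (IH y w Hyw). auto. }
        split; apply G; auto.
      - rewrite !satB.
        assert (G : forall a b, B a b -> (exists y, bwdC R a y /\ sat R V f y) ->
                  exists y, bwdC R b y /\ sat R V f y).
        { intros a' b' Hab' [y [Hy Hf]].
          destruct (Hc a' b' Hab') as [_ [_ Hbw]].
          destruct (proj1 (Hbw y) (ex_intro _ y (conj Hy (Hr y)))) as [w [Hw Hyw]].
          exists w. split; auto. apply (IH y w Hyw). auto. }
        split; apply G; auto. }
    intro phi. apply K. exact H12.
  - intros H. exists (@L X AP R V). split; [exists x1, x1; intro; tauto|].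
    split; [intros a phi; tauto|].
    split; [intros a b Hab phi; symmetry; apply Hab|].
    split; [intros a b c Hab Hbc phi; rewrite (Hab phi); apply Hbc|].
    split; [|exact H].
    intros a b Hab. split; [|split].
    + intro p. exact (Hab (SAtom p)).
    + intro z. split.
      * apply (modal_step X AP R V _ _ (@satF X AP R V) HF (fun x => or_introl eq_refl) _ _ Hab).
      * apply (modal_step X AP R V _ _ (@satF X AP R V) HF (fun x => or_introl eq_refl) b a).
        intro phi; symmetry; apply Hab.
    + intro z. split.
      * apply (modal_step X AP R V _ _ (@satB X AP R V) HB (fun x => or_introl eq_refl) _ _ Hab).
      * apply (modal_step X AP R V _ _ (@satB X AP R V) HB (fun x => or_introl eq_refl) b a).
        intro phi; symmetry; apply Hab.
Qed.
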